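(* Let $\mathcal B$ be a chordal building set on a finite set $S\subset\mathbb N$ of even cardinality $2k$ with no connected component of odd cardinality. Then the map sending an alternating $\mathcal B$-permutation $(x_1x_2\cdots x_{2k})$ to the chain $(\emptyset,\{x_1,x_2\},\{x_1,\dots,x_4\},\dots,\{x_1,\dots,x_{2k}\})$ is a bijection from the set of alternating $\mathcal B$-permutations onto the set of maximal chains of $\widehat{\mathcal P}_{\mathcal B}$ that have no decreasing position (with respect to $\mu_{\mathcal B}$).
   Context: A building set on a finite set $S\subset\mathbb N$ is a collection $\mathcal B$ of nonempty subsets of $S$ containing every singleton $\{i\}$, $i\in S$, such that $I,J\in\mathcal B$ and $I\cap J\neq\emptyset$ imply $I\cup J\in\mathcal B$. Its connected components are the inclusion-maximal elements of $\mathcal B$. For $I\subseteq S$, $\mathcal B|_I=\{J\in\mathcal B:J\subseteq I\}$. $\mathcal B$ is chordal if for every $I=\{i_1<\dots<i_r\}\in\mathcal B$ and every $1<s<r$, $\{i_s,\dots,i_r\}\in\mathcal B$. For a building set $\mathcal B$ on $S$ with $|S|=m$, a $\mathcal B$-permutation is a sequence $(x_1x_2\cdots x_m)$ listing each element of $S$ exactly once such that for each $1\le i\le m$, $x_i$ and $\max\{x_1,\dots,x_i\}$ lie in the same connected component of $\mathcal B|_{\{x_1,\dots,x_i\}}$. It is alternating if $x_1>x_2<x_3>x_4<\cdots$. $\widehat{\mathcal P}_{\mathcal B}=\{I\subseteq S:\ \mathcal B|_I\text{ has no connected component of odd cardinality}\}$, ordered by inclusion; its maximal chains have the form $\emptyset=I_0\subset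 I_1\subset\dots\subset I_k=S$ with $|I_i|=2i$. For a covering pair $I_1\subset I_2$ ($|I_2|=|I_1|+2$), $I_2\setminus I_1$ lies in a single connected component of $\mathcal B|_{I_2}$, denoted $\mathfrak C(I_2;I_1)$. On $\Omega=\mathbb Z\times\mathbb Z$ define $(a_1,a_2)\ge(b_1,b_2)$ iff either $a_1\ge a_2\ge b_1\ge b_2$ or $a_1=b_1\ge a_2\ge b_2$. On $\mathbb Z\times\Omega$ define $(x,\alpha)\succeq(y,\beta)$ iff $x>y$, or $x=y$ and $\alpha\ge\beta$; $\succ$ means $\succeq$ and $\neq$. Set $\mu_{\mathcal B}(I_1,I_2)=\bigl(\max\mathfrak C(I_2;I_1),(\max(I_2\setminus I_1),\min(I_2\setminus I_1))\bigr)$ for covering pairs. A maximal chain $(I_0,\dots,I_k)$ has a decreasing position at $1\le i<k$ if $\mu_{\mathcal B}(I_{i-1},I_i)\succ\mu_{\mathcal B}(I_i,I_{i+1})$. *)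

(* Defs.v *)
From mathcomp Require Import all_boot all_order.
From mathcomp Require Import finmap.
Set Implicit Arguments. Unset Strict Implicit. Unset Printing Implicit Defensive.
Local Open Scope fset_scope.

Definition building_set (S : {fset nat}) (B : {fset {fset nat}}) : Prop :=
  (forall I, I \in B -> I != fset0 /\ I `<=` S) /\
  (forall i, i \in S -> [fset i] \in B) /\
  (forall I J, I \in B -> J \in B -> I `&` J != fset0 -> I `|` J \in B).

Definition restr (B : {fset {fset nat}}) (I : {fset nat}) : {fset {fset nat}} :=
  [fset J in B | J `<=` I].

(* connected components of B|_I : inclusion-maximal elements *)
Definition comps (B : {fset {fset nat}}) (I : {fset nat}) : {fset {fset nat}} :=
  [fset C in restr B I | all (fun K => (C `<=` K) ==> (K == C)) (restr B I)].

Definition chordal (B : {fset {fset nat}}) : Prop :=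
  forall I, I \in B -> forall s, 0 < s -> s < (#|` I|).-1 ->
    [fset x in drop s (sort leq I)] \in B.

Definition same_comp (B : {fset {fset nat}}) (I : {fset nat}) (x y : nat) : bool :=
  has (fun C => (x \in C) && (y \in C)) (comps B I).

Definition smax (s : seq nat) : nat := \max_(x <- s) x.
Definition smin (s : seq nat) : nat := head 0 (sort leq s).

Definition B_perm (S : {fset nat}) (B : {fset {fset nat}}) (xs : seq nat) : Prop :=
  perm_eq xs S /\
  forall i, 0 < i <= size xs ->
    same_comp B [fset x in take i xs] (nth 0 xs i.-1) (smax (take i xs)).

(* alternating: x1 > x2 < x3 > x4 < ... (0-indexed positions j, j+1) *)
Definition alternating (xs : seq nat) : Prop :=
  forall j, j.+1 < size xs ->
    if odd j then nth 0 xs j < nth 0 xs j.+1 else nth 0 xs j > nth 0 xs j.+1.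

Definition Phat (S : {fset nat}) (B : {fset {fset nat}}) (I : {fset nat}) : bool :=
  (I `<=` S) && all (fun C => ~~ odd #|` C|) (comps B I).

Definition max_chain (S : {fset nat}) (B : {fset {fset nat}}) (c : seq {fset nat}) : Prop :=
  all (Phat S B) c /\ sorted (fun X Y => X `<` Y) c /\
  (forall X, Phat S B X -> all (fun Y => (X `<=` Y) || (Y `<=` X)) c -> X \in c).

(* C(I2; I1): the connected component of B|_{I2} containing I2 \ I1 *)
Definition frakC (B : {fset {fset nat}}) (I1 I2 : {fset nat}) : {fset nat} :=
  head fset0 [seq C <- comps B I2 | (I2 `\` I1) `<=` C].

Definition ge_Om (a b : nat * nat) : bool :=
  [&& a.1 >= a.2, a.2 >= b.1 & b.1 >= b.2] || [&& a.1 == b.1, a.2 >= b.2 & b.1 >= b.2].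
Definition geZOm (a b : nat * (nat * nat)) : bool :=
  (a.1 > b.1) || ((a.1 == b.1) && ge_Om a.2 b.2).
Definition gtZOm (a b : nat * (nat * nat)) : bool := geZOm a b && (a != b).

Definition mu (B : {fset {fset nat}}) (I1 I2 : {fset nat}) : nat * (nat * nat) :=
  (smax (frakC B I1 I2), (smax (I2 `\` I1), smin (I2 `\` I1))).

Definition no_decreasing (B : {fset {fset nat}}) (c : seq {fset nat}) : Prop :=
  forall i, 0 < i -> i.+1 < size c ->
    ~~ gtZOm (mu B (nth fset0 c i.-1) (nth fset0 c i)) (mu B (nth fset0 c i) (nth fset0 c i.+1)).

Definition perm_to_chain (xs : seq nat) : seq {fset nat} :=
  [seq [fset x in take (2 * i) xs] | i <- iota 0 (size xs)./2.+1].

(* Main.v *)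
Require Import Defs.
From mathcomp Require Import all_boot all_order.
From mathcomp Require Import finmap.
From Stdlib Require Import Lia.
From mathcomp Require Import zify.
Set Implicit Arguments. Unset Strict Implicit. Unset Printing Implicit Defensive.
Local Open Scope fset_scope.

Section Comps.
Variable S : {fset nat}.
Variable B : {fset {fset nat}}.
Hypothesis hB : building_set S B.

Lemma restrP J I : (J \in restr B I) = (J \in B) && (J `<=` I).
Proof. by rewrite /restr !inE. Qed.

Lemma compsE (C I : {fset nat}) : C \in comps B I = (C \in restr B I) && all (fun K => (C `<=` K) ==> (K == C)) (restr B I).
Proof. by rewrite /comps in_fset. Qed.

Lemma compsP C I : C \in comps B I ->
  [/\ C \in B, C `<=` I & forall K, K \in B -> K `<=` I -> C `<=` K -> K = C].
Proof.
rewrite compsE restrP => /andP[/andP[CB CI] /allP H]; split => // K KB KI CK.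
have := H K; rewrite restrP KB KI CK => /(_ isT) /eqP; done.
Qed.

Lemma compsI C I : C \in B -> C `<=` I ->
  (forall K, K \in B -> K `<=` I -> C `<=` K -> K = C) -> C \in comps B I.
Proof.
move=> CB CI H; rewrite compsE restrP CB CI /=; apply/allP => K.
by rewrite restrP => /andP[KB KI]; apply/implyP => CK; rewrite (H K KB KI CK).
Qed.

Lemma comp_ex K I : K \in B -> K `<=` I -> exists2 C, C \in comps B I & K `<=` C.
Proof.
move=> KB KI; move: {2}(#|` I| - #|` K|) (leqnn (#|` I| - #|` K|)) => n.
elim: n K KB KI => [|n IH] K KB KI Hn.
  exists K => //; apply: compsI => // J JB JI KJ.
  apply/eqP; rewrite eq_sym -(geq_leqif (fsubset_leqif_cards KJ)).
  have := fsubset_leq_card JI; move: Hn; clear; lia.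
case: (boolP (K \in comps B I)) => Kc; first by exists K.
move: Kc; rewrite compsE restrP KB KI /= => /allPn [J]; rewrite restrP => /andP[JB JI].
rewrite negb_imply => /andP[KJ nJK].
have ltKJ : #|` K| < #|` J|.
  have [h2 h3] := fsubset_leqif_cards KJ; rewrite ltn_neqAle h2 andbT h3 eq_sym //.
have hn : #|` I| - #|` J| <= n.
  have := fsubset_leq_card JI; move: Hn; clear -ltKJ; lia.
have [C CC JC] := IH J JB JI hn.
by exists C => //; apply: fsubset_trans JC.
Qed.

Lemma comp_uniq I C1 C2 x : C1 \in comps B I -> C2 \in comps B I ->
  x \in C1 -> x \in C2 -> C1 = C2.
Proof.
case: hB => _ [_ hU].
move=> /compsP[B1 I1 H1] /compsP[B2 I2 H2] x1 x2.
have ne : C1 `&` C2 != fset0 by apply/eqP => /fsetP /(_ x); rewrite !inE x1 x2.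
have U := hU _ _ B1 B2 ne.
have UI : C1 `|` C2 `<=` I by rewrite fsubUset I1 I2.
have e1 := H1 _ U UI (fsubsetUl _ _).
have e2 := H2 _ U UI (fsubsetUr _ _).
by rewrite -e1 e2.
Qed.

Lemma comp_of I x : I `<=` S -> x \in I -> exists2 C, C \in comps B I & x \in C.
Proof.
case: hB => _ [hs _] IS xI.
have xsub : [fset x] `<=` I by rewrite fsub1set.
have [C CC sC] := comp_ex (hs x (fsubsetP IS x xI)) xsub.
by exists C => //; rewrite -fsub1set.
Qed.

Lemma same_compP I x y :
  reflect (exists2 C, C \in comps B I & (x \in C) && (y \in C)) (same_comp B I x y).
Proof. exact: hasP. Qed.

Lemma inB_same I K x y : K \in B -> K `<=` I -> x \in K -> y \in K -> same_comp B I x y.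
Proof.
move=> KB KI xK yK; have [C CC KC] := comp_ex KB KI.
by apply/same_compP; exists C => //; rewrite (fsubsetP KC _ xK) (fsubsetP KC _ yK).
Qed.

Lemma same_comp_sub X Y x y : X `<=` Y -> same_comp B X x y -> same_comp B Y x y.
Proof.
move=> XY /same_compP[C /compsP[CB CX _] /andP[xC yC]].
exact: (inB_same CB (fsubset_trans CX XY)).
Qed.

Lemma same_comp_trans I x y z : same_comp B I x y -> same_comp B I y z -> same_comp B I x z.
Proof.
move=> /same_compP[C1 c1 /andP[x1 y1]] /same_compP[C2 c2 /andP[y2 z2]].
rewrite (comp_uniq c1 c2 y1 y2) in x1.
by apply/same_compP; exists C2 => //; rewrite x1 z2.
Qed.

Lemma same_comp_sym I x y : same_comp B I x y -> same_comp B I y x.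
Proof. by move=> /same_compP[C c /andP[x1 y1]]; apply/same_compP; exists C => //; rewrite x1 y1. Qed.

Lemma PhatP I : reflect (I `<=` S /\ forall C, C \in comps B I -> ~~ odd #|` C|) (Phat S B I).
Proof.
rewrite /Phat; case: (I `<=` S); last by constructor; case.
case: (@allP _ (fun C : {fset nat} => ~~ odd #|` C|) (comps B I)) => h; constructor; first by split.
by case => _ h2; apply: h => C /h2.
Qed.

End Comps.

Section Parity.
Variable S : {fset nat}.
Variable B : {fset {fset nat}}.
Hypothesis hB : building_set S B.

Lemma even_union (X U : {fset nat}) : Phat S B X -> U `<=` X ->
  (forall C, C \in comps B X -> C `&` U != fset0 -> C `<=` U) -> ~~ odd #|` U|.
Proof.
move=> /PhatP[XS Xev]; move: {2}#|` U| (leqnn #|` U|) => n.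
elim: n U => [|n IH] U.
  by rewrite leqn0 => /eqP ->.
move=> Un UX HU; case: (U =P fset0) => [->|/eqP /fset0Pn[x xU]]; first by rewrite cardfs0.
have [C CC xC] := comp_of hB XS (fsubsetP UX x xU).
have CU : C `<=` U by apply: HU => //; apply/fset0Pn; exists x; rewrite inE xC xU.
have cd := cardfsDS CU; have cle := fsubset_leq_card CU.
have Cpos : 0 < #|` C| by rewrite cardfs_gt0; apply/fset0Pn; exists x.
have ev : ~~ odd #|` U `\` C|.
  apply: IH.
  - by rewrite cd; move: Un; clear -Cpos cle; lia.
  - by apply: fsubset_trans UX; apply: fsubsetDl.
  move=> C' C'C /fset0Pn[y]; rewrite !inE => /and3P[yC' yC yU].
  have CU' : C' `<=` U by apply: HU => //; apply/fset0Pn; exists y; rewrite inE yC' yU.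
  apply/fsubsetP => z zC'; rewrite !inE (fsubsetP CU' z zC') andbT.
  apply/negP => zC; have e := comp_uniq hB C'C CC zC' zC.
  by move: yC; rewrite -e yC'.
have : #|` U| = (#|` C| + #|` U `\` C|)%N by rewrite cd; clear -cle; lia.
by move=> ->; rewrite oddD (negbTE ev) (negbTE (Xev C CC)).
Qed.

Lemma even_Phat X : Phat S B X -> ~~ odd #|` X|.
Proof. by move=> h; apply: (even_union h) => // C /compsP[_ CX _] _. Qed.

Lemma even_cap (X Y C : {fset nat}) : Phat S B X -> X `<=` Y -> Y `<=` S -> C \in comps B Y ->
  ~~ odd #|` C `&` X|.
Proof.
move=> hX XY YS CC; apply: (even_union hX); first exact: fsubsetIr.
move=> C' C'C /fset0Pn[x]; rewrite !inE => /and3P[xC' xC xX].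
have [_ C'X _] := compsP C'C.
have [C'B _ _] := compsP C'C.
have [D DC C'D] := comp_ex C'B (fsubset_trans C'X XY).
have e := comp_uniq hB DC CC (fsubsetP C'D x xC') xC.
apply/fsubsetP => z zC'; rewrite inE (fsubsetP C'X z zC') andbT.
by rewrite -e (fsubsetP C'D z zC').
Qed.

Lemma card_new (X : {fset nat}) (a b : nat) (C : {fset nat}) : a \notin X -> b \notin X -> a != b ->
  C `<=` X `|` [fset a; b] -> #|` C `\` X| = ((a \in C) + (b \in C))%N.
Proof.
move=> aX bX ab CY.
rewrite (cardfsD1 a) (cardfsD1 b).
have -> : (C `\` X) `\ a `\ b = fset0.
  apply/fsetP => z; rewrite !inE; apply/negP => /and4P[zb za zX zC].
  by move: (fsubsetP CY z zC); rewrite !inE (negbTE zX) (negbTE za) (negbTE zb).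
by rewrite cardfs0 addn0 !inE (negbTE aX) (negbTE bX) eq_sym ab.
Qed.

Lemma card_split (X C : {fset nat}) : #|` C| = (#|` C `&` X| + #|` C `\` X|)%N.
Proof. by rewrite cardfsID. Qed.

Lemma step_iff (X : {fset nat}) (a b : nat) : Phat S B X -> a \notin X -> b \notin X -> a != b ->
  X `|` [fset a; b] `<=` S ->
  Phat S B (X `|` [fset a; b]) = same_comp B (X `|` [fset a; b]) a b.
Proof.
move=> hX aX bX ab YS.
have XY : X `<=` X `|` [fset a; b] by apply: fsubsetUl.
have aY : a \in X `|` [fset a; b] by rewrite !inE eqxx orbT.
have bY : b \in X `|` [fset a; b] by rewrite !inE eqxx !orbT.
apply/idP/idP.
  move=> /PhatP[_ Yev].
  have [C CC aC] := comp_of hB YS aY.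
  have [_ CY _] := compsP CC.
  case bC : (b \in C); first by apply/same_compP; exists C => //; rewrite aC bC.
  have := Yev C CC; rewrite (card_split X) (card_new aX bX ab CY) aC bC oddD.
  by rewrite (negbTE (even_cap hX XY YS CC)).
move=> /same_compP[C0 C0C /andP[aC0 bC0]].
apply/PhatP; split => // C CC.
have [_ CY _] := compsP CC.
rewrite (card_split X) (card_new aX bX ab CY) oddD (negbTE (even_cap hX XY YS CC)) /=.
case aC : (a \in C); case bC : (b \in C) => //.
- by have e := comp_uniq hB CC C0C aC aC0; move: bC; rewrite e bC0.
- by have e := comp_uniq hB CC C0C bC bC0; move: aC; rewrite e aC0.
Qed.

End Parity.

Lemma smax_ub (s : seq nat) x : x \in s -> x <= smax s.
Proof. move=> xs; rewrite /smax. exact: (@leq_bigmax_seq _ s xpredT id x xs). Qed.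

Lemma smax_le (s : seq nat) m : (forall x, x \in s -> x <= m) -> smax s <= m.
Proof. by move=> h; apply/bigmax_leqP_seq => i /h. Qed.

Lemma smax_cons x (s : seq nat) : smax (x :: s) = maxn x (smax s).
Proof. by rewrite /smax big_cons. Qed.

Lemma smax_mem (s : seq nat) : s != [::] -> smax s \in s.
Proof.
elim: s => [//|x s IH] _; rewrite smax_cons.
case: s IH => [|y s] IH; first by rewrite /smax big_nil maxn0 inE.
have := IH isT => h.
case: (leqP x (smax (y :: s))) => hx.
  by rewrite inE h orbT.
by rewrite inE eqxx.
Qed.

Lemma smax_eq (s1 s2 : seq nat) : s1 =i s2 -> smax s1 = smax s2.
Proof.
move=> e; apply/eqP; rewrite eqn_leq; apply/andP; split; apply: smax_le => x xs;
  apply: smax_ub; by rewrite ?e // -e.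
Qed.

Lemma smin_lb (s : seq nat) x : x \in s -> smin s <= x.
Proof.
rewrite /smin -(mem_sort leq) => xs.
have : sorted leq (sort leq s) by apply: sort_sorted; exact: leq_total.
case: (sort leq s) xs => [//|y t]; rewrite inE /= => /orP[/eqP->//|xt] p.
by have := order_path_min leq_trans p => /allP /(_ x xt).
Qed.

Lemma smin_mem (s : seq nat) : s != [::] -> smin s \in s.
Proof.
rewrite /smin -(mem_sort leq) => ne.
have : sort leq s != [::] by rewrite -size_eq0 size_sort size_eq0.
by case: (sort leq s) => [//|y t] _; rewrite inE eqxx.
Qed.

Lemma pair_card (D : {fset nat}) : #|` D| = 2 ->
  smin D < smax D /\ forall x, (x \in D) = (x == smax D) || (x == smin D).
Proof.
move=> cD.
have ne : (D : seq nat) != [::] by rewrite -size_eq0; move: cD => /= ->.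
have Mx := smax_mem ne; have mn := smin_mem ne.
have [lt|ge] := ltnP (smin D) (smax D).
- split => // x.
  have e := cardfsD1 (smax D) D; rewrite Mx (cardfsD1 (smin D) (D `\ smax D)) in e.
  have mn' : smin D \in D `\ smax D by rewrite !inE mn andbT neq_ltn lt.
  rewrite mn' cD in e.
  have e0 : D `\ smax D `\ smin D = fset0 by apply/eqP; rewrite -cardfs_eq0; move: e; clear; lia.
  apply/idP/idP => [xD|/orP[/eqP->|/eqP->]] //.
  apply/negPn/negP; rewrite negb_or => /andP[h1 h2].
  have : x \in D `\ smax D `\ smin D by rewrite !inE h1 h2 xD.
  by rewrite e0 inE.
- exfalso.
  have e : D `<=` [fset smax D].
    apply/fsubsetP => x xD; rewrite inE; apply/eqP.
    have := smax_ub xD; have := smin_lb xD; move: ge; clear; lia.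
  by have := fsubset_leq_card e; rewrite cardfs1 cD.
Qed.

Lemma sorted_drop_count (l : seq nat) b : sorted leq l ->
  drop (count (fun x => x <= b) l) l = filter (fun x => b < x) l.
Proof.
elim: l => [//|x l IH] /= p.
have sl : sorted leq l by apply: path_sorted p.
case: (leqP x b) => hx /=.
  by rewrite add0n IH.
have al : all (fun y => b < y) l.
  apply/allP => y yl; have := order_path_min leq_trans p => /allP /(_ y yl).
  by move: hx; clear; lia.
have -> : count (fun x => x <= b) l = 0.
  apply/eqP; rewrite -leqn0 leqNgt -has_count; apply/hasPn => y /(allP al).
  by rewrite -ltnNge.
by rewrite (all_filterP al).
Qed.

Lemma chord_tail (B : {fset {fset nat}}) (C : {fset nat}) b : chordal B -> C \in B ->
  (exists2 y, y \in C & y <= b) ->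
  (exists u v, [/\ u \in C, v \in C, u != v, b < u & b < v]) ->
  [fset x in C | b < x] \in B.
Proof.
move=> hc CB [y yC yb] [u [v [uC vC uv bu bv]]].
set l := sort leq C.
have sl : sorted leq l by apply: sort_sorted; exact: leq_total.
have ul : uniq l by rewrite sort_uniq fset_uniq.
set s := count (fun x => x <= b) l.
have s0 : 0 < s by rewrite -has_count; apply/hasP; exists y => //; rewrite mem_sort.
have c2 : 2 <= count (fun x => b < x) l.
  rewrite -size_filter.
  have := @uniq_leq_size _ [:: u; v] (filter (fun x => b < x) l).
  rewrite /= inE uv /= => h; apply: h => // z; rewrite !inE mem_filter mem_sort.
  by case/orP => /eqP ->; rewrite ?uC ?vC ?bu ?bv.
have sz : (s + count (fun x => b < x) l)%N = #|` C|.
  rewrite -(size_sort leq) -/l -(count_predC (fun x => x <= b) l).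
  congr (_ + _)%N; apply: eq_count => z /=; by rewrite ltnNge.
have := hc C CB s s0 _; rewrite sorted_drop_count // => h.
have -> : [fset x in C | b < x] = [fset x in [seq x <- l | b < x]].
  by apply/fsetP => z; rewrite !inE mem_filter mem_sort andbC.
apply: h; move: sz c2; clear; lia.
Qed.

Section Step.
Variable S : {fset nat}.
Variable B : {fset {fset nat}}.
Hypothesis hB : building_set S B.
Hypothesis hc : chordal B.

Lemma intermediate (X Z : {fset nat}) : Phat S B X -> Phat S B Z -> X `<=` Z ->
  (#|` X| + 4 <= #|` Z|)%N -> exists Y, [/\ Phat S B Y, X `<` Y & Y `<` Z].
Proof.
move=> hX hZ XZ cXZ.
have [ZS Zev] := PhatP S B Z hZ.
set N := Z `\` X.
have cN : #|` N| = (#|` Z| - #|` X|)%N by rewrite cardfsDS.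
have neN : (N : seq nat) != [::] by rewrite -size_eq0 -/(#|` N|) cN; move: cXZ; clear; lia.
set n1 := smax N.
have n1N : n1 \in N := smax_mem neN.
move: (n1N); rewrite !inE => /andP[n1X n1Z].
have [C CC n1C] := comp_of hB ZS n1Z.
have [CB CZ _] := compsP CC.
have ev1 := even_cap hB hX XZ ZS CC.
have ev2 := Zev C CC.
have cCX : (2 <= #|` C `\` X|)%N.
  have h1 : n1 \in C `\` X by rewrite !inE n1X n1C.
  have h2 : (0 < #|` C `\` X|)%N by rewrite cardfs_gt0; apply/fset0Pn; exists n1.
  move: ev2; rewrite (card_split X C) oddD (negbTE ev1) /=.
  by case: #|` C `\` X| h2 => [|[|m]].
set N2 := (C `\` X) `\ n1.
have cN2 : (0 < #|` N2|)%N.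
  move: cCX; rewrite (cardfsD1 n1 (C `\` X)) -/N2.
  have -> : n1 \in C `\` X by rewrite !inE n1X n1C.
  rewrite /= add1n; clear; lia.
have neN2 : (N2 : seq nat) != [::] by apply/eqP => h; move: cN2; rewrite h.
set n2 := smax N2.
have n2N2 : n2 \in N2 := smax_mem neN2.
move: (n2N2); rewrite !inE => /and3P[n21 n2X n2C].
have n2Z : n2 \in Z := fsubsetP CZ n2 n2C.
have n2N : n2 \in N by rewrite !inE n2X n2Z.
have lt21 : n2 < n1.
  by have := smax_ub n2N; rewrite -/n1 leq_eqVlt (negbTE n21).
have [T [TB TC n1T n2T Tge]] : exists T, [/\ T \in B, T `<=` C, n1 \in T, n2 \in T &
    forall z, z \in T -> n2 <= z].
  case: (boolP (has (fun y => y < n2) C)) => [/hasP[y yC yn2]|/hasPn hn].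
  - exists [fset x in C | n2.-1 < x]; split.
    + apply: chord_tail => //; first by exists y => //; move: yn2; clear; lia.
      exists n1, n2; split => //; first by rewrite eq_sym.
      * move: lt21; clear; lia.
      * move: yn2; clear; lia.
    + by apply/fsubsetP => z; rewrite !inE => /andP[].
    + by rewrite !inE n1C; move: lt21; clear; lia.
    + by rewrite !inE n2C; move: yn2; clear; lia.
    + move=> z; rewrite !inE => /andP[_]; move: yn2; clear; lia.
  - exists C; split => // z zC; have := hn z zC; clear; lia.
have TY : T `<=` X `|` [fset n1; n2].
  apply/fsubsetP => z zT; rewrite !inE.
  case zX : (z \in X) => //=.
  case: (z =P n1) => //= /eqP zn1; apply/eqP.
  have zC := fsubsetP TC z zT.
  have zN2 : z \in N2 by rewrite !inE zn1 zX zC.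
  have := smax_ub zN2; have := Tge z zT; rewrite -/n2; clear; lia.
have YZ : X `|` [fset n1; n2] `<=` Z.
  by rewrite fsubUset XZ fsubUset !fsub1set n1Z n2Z.
have YS : X `|` [fset n1; n2] `<=` S := fsubset_trans YZ ZS.
have n12 : n1 != n2 by rewrite eq_sym.
exists (X `|` [fset n1; n2]); split.
- rewrite (step_iff hB hX n1X n2X n12 YS).
  exact: (inB_same TB TY n1T n2T).
- rewrite fproperE fsubsetUl /=; apply/negP => /fsubsetP /(_ n1).
  by rewrite !inE eqxx orbT (negbTE n1X) => /(_ isT).
- rewrite fproperE YZ /=; apply/negP => ZY.
  have := fsubset_leq_card ZY; have := cardfsUI X [fset n1; n2].
  rewrite cardfs2 n12; move: cXZ; clear; lia.
Qed.

End Step.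

Lemma take_nth2 (xs : seq nat) i : i.+1 < size xs ->
  take i.+2 xs = take i xs ++ [:: nth 0 xs i; nth 0 xs i.+1].
Proof.
move=> h; rewrite (take_nth 0 h) (take_nth 0 (ltnW h)).
by rewrite -!cats1 -catA.
Qed.

Lemma fset_take2 (xs : seq nat) i : i.+1 < size xs ->
  [fset x in take i.+2 xs] = [fset x in take i xs] `|` [fset nth 0 xs i; nth 0 xs i.+1].
Proof. move=> h; apply/fsetP => z; rewrite take_nth2 // !(inE, mem_cat). by rewrite orbF. Qed.

Lemma fset_take1 (xs : seq nat) i : i < size xs ->
  [fset x in take i.+1 xs] = [fset x in take i xs] `|` [fset nth 0 xs i].
Proof. move=> h; apply/fsetP => z; rewrite (take_nth 0 h) -cats1 !(inE, mem_cat). by rewrite orbF. Qed.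

Lemma nth_notin_take (xs : seq nat) i j : uniq xs -> i <= j -> j < size xs ->
  nth 0 xs j \notin take i xs.
Proof.
move=> u ij js; rewrite in_take ?mem_nth // index_uniq //.
by rewrite -leqNgt.
Qed.

Lemma take_sub (xs : seq nat) i j : i <= j ->
  [fset x in take i xs] `<=` [fset x in take j xs].
Proof.
move=> ij; apply/fsubsetP => z; rewrite !inE.
have -> : take i xs = take i (take j xs) by rewrite -take_min (minn_idPl ij).
by apply: mem_take.
Qed.

Lemma card_take (xs : seq nat) i : uniq xs -> i <= size xs ->
  #|` [fset x in take i xs]| = i.
Proof.
move=> u h; rewrite card_fseq undup_id ?size_take_min ?(minn_idPl h) //.
by apply: take_uniq.
Qed.

Lemma smax_smin_pair (D : {fset nat}) a b : (forall x, (x \in D) = (x == a) || (x == b)) ->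
  b < a -> smax D = a /\ smin D = b.
Proof.
move=> hD ba.
have aD : a \in D by rewrite hD eqxx.
have bD : b \in D by rewrite hD eqxx orbT.
have ne : (D : seq nat) != [::].
  by rewrite -size_eq0 -lt0n; change (0 < #|` D|)%N; rewrite cardfs_gt0; apply/fset0Pn; exists a.
split.
- apply/eqP; rewrite eqn_leq smax_ub // andbT; apply: smax_le => x.
  by rewrite hD => /orP[/eqP->|/eqP->] //; apply: ltnW.
- have := smin_mem ne; have := smin_lb bD; rewrite hD => h /orP[/eqP e|/eqP->] //.
  by move: h; rewrite e leqNgt ba.
Qed.

Lemma sorted_iota_rel (R : rel nat) n m :
  (forall i, n <= i -> i.+1 < n + m -> R i i.+1) -> sorted R (iota n m).
Proof.
elim: m n => [//|m IH] n h /=.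
case: m IH h => [//|m] IH h /=.
apply/andP; split; first by apply: h => //; lia.
have := IH n.+1 => /=; apply => i hi hm; apply: h; lia.
Qed.

Lemma P_proper (xs : seq nat) i j : uniq xs -> i < j -> j <= size xs ->
  [fset x in take i xs] `<` [fset x in take j xs].
Proof.
move=> u ij js; rewrite fproperEcard take_sub ?(ltnW ij) //=.
by rewrite !card_take //; apply: leq_trans (ltnW ij) js.
Qed.

Lemma take2k i : (2 * i).+2 = 2 * i.+1.
Proof. lia. Qed.

Section Main.
Variable S : {fset nat}.
Variable B : {fset {fset nat}}.
Variable k : nat.
Hypothesis hB : building_set S B.
Hypothesis hc : chordal B.
Hypothesis hk : #|` S| = 2 * k.
Hypothesis hSev : forall C, C \in comps B S -> ~~ odd #|` C|.

Lemma Phat0 : Phat S B fset0.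
Proof.
apply/PhatP; split; first exact: fsub0set.
move=> C /compsP[CB C0 _]; case: hB => h _.
have [ne _] := h C CB; move: ne C0; rewrite fsubset0 => /negbTE ->.
by [].
Qed.

Lemma PhatS : Phat S B S.
Proof. by apply/PhatP; split. Qed.

Lemma frakC_eq X Y C z : C \in comps B Y -> z \in Y `\` X -> Y `\` X `<=` C ->
  frakC B X Y = C.
Proof.
move=> CC zD DC; rewrite /frakC.
have Cin : C \in [seq C <- comps B Y | Y `\` X `<=` C] by rewrite mem_filter DC CC.
have all1 : forall C', C' \in [seq C <- comps B Y | Y `\` X `<=` C] -> C' = C.
  move=> C'; rewrite mem_filter => /andP[DC' C'C].
  exact (comp_uniq hB C'C CC (fsubsetP DC' z zD) (fsubsetP DC z zD)).
case: [seq C <- comps B Y | Y `\` X `<=` C] Cin all1 => [//|C' l] _ h /=.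
by apply: h; rewrite inE eqxx.
Qed.

Lemma mu_eq X Y C a b : C \in comps B Y ->
  (forall x, (x \in Y `\` X) = (x == a) || (x == b)) -> b < a -> a \in C -> b \in C ->
  mu B X Y = (smax C, (a, b)).
Proof.
move=> CC hD ba aC bC.
have [e1 e2] := smax_smin_pair hD ba.
have aD : a \in Y `\` X by rewrite hD eqxx.
rewrite /mu e1 e2 (frakC_eq CC aD) //.
by apply/fsubsetP => x; rewrite hD => /orP[/eqP->|/eqP->].
Qed.

Lemma Bperm_uniq xs : B_perm S B xs -> uniq xs.
Proof. by case=> p _; rewrite (perm_uniq p) fset_uniq. Qed.

Lemma Bperm_size xs : B_perm S B xs -> size xs = 2 * k.
Proof. by case=> p _; rewrite (perm_size p) -hk. Qed.

Lemma Bperm_sub xs i : B_perm S B xs -> [fset x in take i xs] `<=` S.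
Proof.
case=> p _; apply/fsubsetP => x; rewrite inE => /mem_take.
by rewrite (perm_mem p).
Qed.

Lemma fw_step xs i : B_perm S B xs -> alternating xs -> i < k ->
  [/\ [fset x in take (2*i).+2 xs] = [fset x in take (2*i) xs] `|` [fset nth 0 xs (2*i); nth 0 xs (2*i).+1],
     nth 0 xs (2*i) \notin [fset x in take (2*i) xs],
     nth 0 xs (2*i).+1 \notin [fset x in take (2*i) xs],
     nth 0 xs (2*i).+1 < nth 0 xs (2*i) &
     same_comp B [fset x in take (2*i).+2 xs] (nth 0 xs (2*i)) (nth 0 xs (2*i).+1) /\
     same_comp B [fset x in take (2*i).+2 xs] (nth 0 xs (2*i).+1) (smax (take (2*i).+2 xs))].
Proof.
move=> hp ha ik.
have u := Bperm_uniq hp; have sz := Bperm_size hp.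
have h2 : (2*i).+1 < size xs by rewrite sz; lia.
have ba : nth 0 xs (2*i).+1 < nth 0 xs (2*i).
  have := ha (2*i) h2; rewrite oddM /=; done.
split.
- exact: fset_take2.
- by rewrite inE nth_notin_take //; lia.
- by rewrite inE nth_notin_take //; lia.
- exact: ba.
have [_ hp2] := hp.
have c2 := hp2 (2*i).+2; rewrite /= sz in c2.
have c1 := hp2 (2*i).+1; rewrite /= sz in c1.
have {}c2 := c2 ltac:(lia).
have {}c1 := c1 ltac:(lia).
have em : smax (take (2*i).+2 xs) = smax (take (2*i).+1 xs).
  rewrite (take_nth 0 h2) (@smax_eq _ (nth 0 xs (2*i).+1 :: take (2*i).+1 xs)).
    rewrite smax_cons; apply/maxn_idPr; apply: ltnW; apply: leq_trans ba _.
    apply: smax_ub; rewrite (take_nth 0 (ltnW h2)) -cats1 mem_cat inE eqxx orbT //.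
  by move=> z; rewrite -cats1 mem_cat !inE orbC.
have sub : [fset x in take (2*i).+1 xs] `<=` [fset x in take (2*i).+2 xs] by apply: take_sub.
have c1' := same_comp_sub sub c1.
rewrite -em in c1'.
split => //.
exact (same_comp_trans hB c1' (same_comp_sym c2)).
Qed.

Lemma fw_Phat xs i : B_perm S B xs -> alternating xs -> i <= k ->
  Phat S B [fset x in take (2*i) xs].
Proof.
move=> hp ha; elim: i => [|i IH] ik.
  have -> : [fset x in take (2*0) xs] = fset0 by apply/fsetP => z; rewrite muln0 take0 !inE.
  exact: Phat0.
have [e aX bX ba [sc _]] := fw_step hp ha ik.
have := IH (ltnW ik); rewrite -take2k e => hX.
move: sc; rewrite e.
have ab : nth 0 xs (2*i) != nth 0 xs (2*i).+1 by rewrite neq_ltn ba orbT.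
rewrite -(step_iff hB hX aX bX ab) //.
rewrite -e; exact: (Bperm_sub _ hp).
Qed.

Lemma fw_mu xs j : B_perm S B xs -> alternating xs -> j < k ->
  mu B [fset x in take (2*j) xs] [fset x in take (2*j).+2 xs] =
  (smax (take (2*j).+2 xs), (nth 0 xs (2*j), nth 0 xs (2*j).+1)).
Proof.
move=> hp ha jk.
have [e aX bX ba [sc1 sc2]] := fw_step hp ha jk.
have /same_compP[C CC /andP[aC bC]] := sc1.
have /same_compP[C' CC' /andP[bC' MC']] := sc2.
have eC := comp_uniq hB CC CC' bC bC'; subst C'.
rewrite (mu_eq CC _ ba aC bC).
  congr (_, _); have [_ CY _] := compsP CC.
  apply/eqP; rewrite eqn_leq; apply/andP; split.
    by apply: smax_le => x xC; apply: smax_ub; move: (fsubsetP CY x xC); rewrite inE.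
  exact: smax_ub.
move=> x; rewrite e !inE.
case: (boolP (x \in take (2*j) xs)) => hx /=; last by [].
apply/esym/negbTE; apply/negP => /orP[/eqP ex|/eqP ex]; subst x.
  by move: aX; rewrite inE hx.
by move: bX; rewrite inE hx.
Qed.

Lemma chain_eq xs : B_perm S B xs ->
  perm_to_chain xs = [seq [fset x in take (2 * i) xs] | i <- iota 0 k.+1].
Proof.
by move=> hp; rewrite /perm_to_chain (Bperm_size hp) mul2n doubleK.
Qed.

Lemma chain_nth xs i : B_perm S B xs -> i < k.+1 ->
  nth fset0 (perm_to_chain xs) i = [fset x in take (2 * i) xs].
Proof.
move=> hp ik; rewrite chain_eq // (nth_map 0) ?size_iota // nth_iota //.
Qed.

Lemma forward xs : B_perm S B xs -> alternating xs ->
  max_chain S B (perm_to_chain xs) /\ no_decreasing B (perm_to_chain xs).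
Proof.
move=> hp ha.
have u := Bperm_uniq hp; have sz := Bperm_size hp.
split.
  split.
  - rewrite chain_eq //; apply/allP => Y /mapP[i]; rewrite mem_iota => /andP[_ ik] ->.
    exact: fw_Phat.
  - split.
      rewrite chain_eq // sorted_map; apply: sorted_iota_rel => i _ ik /=.
      apply: P_proper => //; lia.
    move=> X hX hall.
    have [XS _] := PhatP S B X hX.
    have ev := even_Phat hB hX.
    set j := #|` X|./2.
    have cX : #|` X| = 2 * j by rewrite /j -{1}(odd_double_half #|` X|) (negbTE ev) add0n mul2n.
    have jk : j <= k.
      have := fsubset_leq_card XS; rewrite hk cX; lia.
    have inc : [fset x in take (2 * j) xs] \in perm_to_chain xs.
      by rewrite chain_eq //; apply: map_f; rewrite mem_iota /=; lia.
    have ct : #|` [fset x in take (2 * j) xs]| = 2 * j by rewrite card_take // sz; lia.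
    have := allP hall _ inc => /orP[h|h].
    + have [le ee] := fsubset_leqif_cards h.
      have : X == [fset x in take (2 * j) xs] by rewrite -ee eqn_leq le ct cX leqnn.
      by move/eqP => ->.
    + have [le ee] := fsubset_leqif_cards h.
      have : [fset x in take (2 * j) xs] == X by rewrite -ee eqn_leq le ct cX leqnn.
      by move/eqP => <-.
move=> i i0 isz.
have csz : size (perm_to_chain xs) = k.+1 by rewrite chain_eq // size_map size_iota.
rewrite csz in isz.
case: i i0 isz => [//|j] _ jk.
rewrite !chain_nth //=; try lia.
have m1 := fw_mu hp ha (_ : j < k); rewrite take2k in m1; rewrite m1; last lia.
have m2 := fw_mu hp ha (_ : j.+1 < k); rewrite take2k in m2; rewrite m2; last lia.
rewrite -(take2k j).
rewrite /gtZOm /geZOm /ge_Om /=.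
have M12 : smax (take (2 * j).+2 xs) <= smax (take (2 * j.+2) xs).
  apply: smax_le => x xt; apply: smax_ub.
  by move: (fsubsetP (@take_sub xs (2*j).+2 (2 * j.+2) ltac:(lia)) x); rewrite !inE => /(_ xt).
rewrite ltnNge M12 /=.
have alt : nth 0 xs (2 * j).+1 < nth 0 xs (2 * j).+2.
  have := ha (2*j).+1 ltac:(rewrite sz; lia); rewrite /= oddM /=.
  by [].
have neq : nth 0 xs (2 * j) != nth 0 xs (2 * j).+2 by rewrite nth_uniq // ?sz; lia.
apply/negP => /andP[/andP[_ /orP[/and3P[_ h _]|/and3P[h _ _]]] _].
  by move: h; rewrite leqNgt alt.
by move: neq; rewrite h.
Qed.


Lemma nth_from_chain xs i : B_perm S B xs -> alternating xs -> i < k ->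
  nth 0 xs (2*i) = smax ([fset x in take (2*i.+1) xs] `\` [fset x in take (2*i) xs]) /\
  nth 0 xs (2*i).+1 = smin ([fset x in take (2*i.+1) xs] `\` [fset x in take (2*i) xs]).
Proof.
move=> hp ha ik.
have [e aX bX ba _] := fw_step hp ha ik.
rewrite -take2k e.
set X := [fset x in take (2*i) xs].
suff hD : forall x, (x \in (X `|` [fset nth 0 xs (2*i); nth 0 xs (2*i).+1]) `\` X) = (x == nth 0 xs (2*i)) || (x == nth 0 xs (2*i).+1).
  by have [-> ->] := smax_smin_pair hD ba.
move=> x; rewrite in_fsetD in_fsetU in_fset2.
case: (boolP (x \in X)) => hx /=; last by [].
apply/esym/negbTE; apply/negP => /orP[/eqP ex|/eqP ex]; subst x.
  by move: aX; rewrite hx.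
by move: bX; rewrite hx.
Qed.

Lemma injective_part xs ys : B_perm S B xs -> alternating xs -> B_perm S B ys -> alternating ys ->
  perm_to_chain xs = perm_to_chain ys -> xs = ys.
Proof.
move=> hpx hax hpy hay e.
have sx := Bperm_size hpx; have sy := Bperm_size hpy.
apply: (@eq_from_nth _ 0); first by rewrite sx sy.
move=> j; rewrite sx => jk.
set i := j./2.
have ik : i < k by rewrite /i; move: jk; rewrite -(odd_double_half j); case: (odd j) => /=; lia.
have e0 : [fset x in take (2 * i) xs] = [fset x in take (2 * i) ys].
  rewrite -(chain_nth hpx (_ : i < k.+1)) ?e ?(chain_nth hpy) //; lia.
have e1 : [fset x in take (2 * i.+1) xs] = [fset x in take (2 * i.+1) ys].
  rewrite -(chain_nth hpx (_ : i.+1 < k.+1)) ?e ?(chain_nth hpy) //; lia.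
have [x1 x2] := nth_from_chain hpx hax ik.
have [y1 y2] := nth_from_chain hpy hay ik.
have hj : j = (odd j + 2 * i)%N by rewrite /i mul2n odd_double_half.
case: (odd j) hj => /= -> ; first by rewrite add1n x2 y2 e0 e1.
by rewrite add0n x1 y1 e0 e1.
Qed.

Lemma even_half n : ~~ odd n -> n = 2 * n./2.
Proof. by move=> h; rewrite -{1}(odd_double_half n) (negbTE h) add0n mul2n. Qed.

Section Surj.
Variable c : seq {fset nat}.
Hypothesis hmc : max_chain S B c.
Hypothesis hnd : no_decreasing B c.

Local Notation I i := (nth fset0 c i).

Lemma c_Phat i : i < size c -> Phat S B (I i).
Proof. by case: hmc => /allP h _ ic; apply: h; rewrite mem_nth. Qed.

Lemma c_lt i j : i < j -> j < size c -> I i `<` I j.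
Proof.
move=> ij jc; case: hmc => _ [so _].
have tr : transitive (fun X Y : {fset nat} => X `<` Y).
  by move=> Y X Z h1 h2; apply: fproper_sub_trans h1 (fproper_sub h2).
by apply: (sorted_ltn_nth tr fset0 so); rewrite ?inE //; apply: ltn_trans jc.
Qed.

Lemma c_le i j : i <= j -> j < size c -> I i `<=` I j.
Proof.
rewrite leq_eqVlt => /orP[/eqP->|ij] jc //.
exact: fproper_sub (c_lt ij jc).
Qed.

Lemma c_mem X : Phat S B X -> (forall Y, Y \in c -> (X `<=` Y) || (Y `<=` X)) -> X \in c.
Proof. by case: hmc => _ [_ h] hX hall; apply: h => //; apply/allP. Qed.

Lemma c_sub i : i < size c -> I i `<=` S.
Proof. by move=> ic; have [h _] := PhatP S B _ (c_Phat ic). Qed.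

Lemma c0 : 0 < size c /\ I 0 = fset0.
Proof.
have m : fset0 \in c by apply: c_mem; [exact: Phat0 | move=> Y _; rewrite fsub0set].
have sz : 0 < size c by case: c m.
split => //.
have pi := index_mem fset0 c; rewrite m in pi.
have e := nth_index fset0 m.
case p: (index fset0 c) e pi => [|p'] e pi; first exact: e.
have := c_lt (ltn0Sn p') pi; rewrite e => /fproper_ltn_card; rewrite cardfs0.
by [].
Qed.

Lemma clast : I (size c).-1 = S.
Proof.
have m : S \in c.
  apply: c_mem; first exact: PhatS.
  move=> Y /(nthP fset0)[i ic <-]; by rewrite c_sub ?orbT.
have pi : index S c < size c by rewrite index_mem.
have e := nth_index fset0 m.
have [sz _] := c0.
have : index S c <= (size c).-1 by move: pi; clear; lia.
rewrite leq_eqVlt => /orP[/eqP h|h]; first by rewrite -h e.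
have lt1 : (size c).-1 < size c by lia.
have := c_lt h lt1; rewrite e => h2.
have := fproper_ltn_card h2; have := fsubset_leq_card (c_sub lt1).
clear; lia.
Qed.

Lemma c_step i : i.+1 < size c -> #|` I i.+1| = (#|` I i| + 2)%N.
Proof.
move=> ic.
have hi := c_Phat (ltnW ic); have hi1 := c_Phat ic.
have lt := c_lt (ltnSn i) ic.
have cl := fproper_ltn_card lt.
have e1 := even_Phat hB hi; have e2 := even_Phat hB hi1.
have d1 := even_half e1; have d2 := even_half e2.
have ge : (#|` I i| + 2 <= #|` I i.+1|)%N.
  move: cl; rewrite d1 d2; clear; lia.
have ge4 : ~~ (#|` I i| + 4 <= #|` I i.+1|)%N.
  apply/negP => h.
  have [Y [hY XY YZ]] := intermediate hB hc hi hi1 (fproper_sub lt) h.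
  have Yc : Y \in c.
    apply: c_mem => // Z /(nthP fset0)[j jc <-].
    case: (leqP j i) => ji.
      by rewrite (fsubset_trans (c_le ji (ltnW ic)) (fproper_sub XY)) orbT.
    by rewrite (fsubset_trans (fproper_sub YZ) (c_le ji jc)).
  have [j jc ej] := nthP fset0 Yc.
  case: (leqP j i) => ji.
    have YI : Y `<=` I i by rewrite -ej; exact: c_le ji (ltnW ic).
    by have := fproper_sub_trans XY YI => /fproper_neq; rewrite eqxx.
  have YI : I i.+1 `<=` Y by rewrite -ej; exact: c_le ji jc.
  by have := fproper_sub_trans YZ YI => /fproper_neq; rewrite eqxx.
move: ge ge4; rewrite d1 d2; clear; lia.
Qed.

Lemma c_card i : i < size c -> #|` I i| = 2 * i.
Proof.
elim: i => [|i IH] ic; first by have [_ ->] := c0; rewrite cardfs0.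
by rewrite c_step // IH ?(ltnW ic) //; lia.
Qed.

Lemma c_size : size c = k.+1.
Proof.
have [sz _] := c0.
have lt1 : (size c).-1 < size c by lia.
have := c_card lt1; rewrite clast hk; lia.
Qed.


Local Notation D i := (I i.+1 `\` I i).
Local Notation a i := (smax (D i)).
Local Notation b i := (smin (D i)).

Lemma smax_sub (X Y : {fset nat}) : X `<=` Y -> smax X <= smax Y.
Proof. by move=> XY; apply: smax_le => x xX; apply: smax_ub; exact: (fsubsetP XY). Qed.

Lemma c_D i : i < k -> [/\ b i < a i, forall x, (x \in D i) = (x == a i) || (x == b i),
  a i \notin I i, b i \notin I i & I i.+1 = I i `|` [fset a i; b i]].
Proof.
move=> ik; have ic : i.+1 < size c by rewrite c_size.
have le := c_le (leqnSn i) ic.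
have cD : #|` D i| = 2 by rewrite cardfsDS // !c_card ?(ltnW ic) //; lia.
have [ba hD] := pair_card cD.
have aD : a i \in D i by rewrite hD eqxx.
have bD : b i \in D i by rewrite hD eqxx orbT.
split => //.
- by move: aD; rewrite in_fsetD => /andP[].
- by move: bD; rewrite in_fsetD => /andP[].
apply/fsetP => x; rewrite in_fsetU in_fset2 -hD in_fsetD.
case: (boolP (x \in I i)) => hx /=; last by [].
exact: (fsubsetP le).
Qed.

Lemma c_sc i : i < k -> same_comp B (I i.+1) (a i) (b i).
Proof.
move=> ik; have ic : i.+1 < size c by rewrite c_size.
have [ba _ aX bX e] := c_D ik.
have ab : a i != b i by rewrite neq_ltn ba orbT.
have hX := c_Phat (ltnW ic); have hY := c_Phat ic.
have := step_iff hB hX aX bX ab; rewrite -e => h.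
by rewrite -(h (c_sub ic)).
Qed.

Lemma c_mu i : i < k -> exists C, [/\ C \in comps B (I i.+1), a i \in C, b i \in C &
  mu B (I i) (I i.+1) = (smax C, (a i, b i))].
Proof.
move=> ik; have [ba hD _ _ _] := c_D ik.
have /same_compP[C CC /andP[aC bC]] := c_sc ik.
by exists C; split => //; apply: mu_eq.
Qed.

Lemma c_top i : i < k -> exists C, [/\ C \in comps B (I i.+1), a i \in C, b i \in C,
  mu B (I i) (I i.+1) = (smax C, (a i, b i)) & smax C = smax (I i.+1)].
Proof.
elim: i => [|i IH] ik.
  have [C [CC aC bC em]] := c_mu ik.
  exists C; split => //.
  have [CB CY _] := compsP CC.
  apply/eqP; rewrite eqn_leq smax_sub //=.
  have [ba hD aX bX e] := c_D ik.
  have [_ e0] := c0.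
  apply: smax_le => x; rewrite e in_fsetU in_fset2 => /orP[|/orP[/eqP->|/eqP->]].
  - by rewrite e0 in_fset0.
  - exact: smax_ub.
  by apply: leq_trans (ltnW ba) (smax_ub aC).
have [C0 [CC0 aC0 bC0 em0 sm0]] := IH (ltnW ik).
have [C [CC aC bC em]] := c_mu ik.
exists C; split => //.
have [CB CY _] := compsP CC.
have ic : i.+2 < size c by rewrite c_size.
have nd := hnd (ltn0Sn i) ic; rewrite /= em0 em in nd.
have le : smax C0 <= smax C.
  rewrite leqNgt; apply/negP => lt; move: nd; rewrite /gtZOm /geZOm /= lt /=.
  apply/negP; rewrite negbK; apply/eqP => h; move: lt; case: h => -> _ _.
  by rewrite ltnn.
apply/eqP; rewrite eqn_leq smax_sub //=.
have [ba hD aX bX e] := c_D ik.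
apply: smax_le => x; rewrite e in_fsetU in_fset2 => /orP[xI|/orP[/eqP->|/eqP->]].
- by apply: leq_trans (smax_ub xI) _; rewrite -sm0.
- exact: smax_ub.
- by apply: leq_trans (ltnW ba) (smax_ub aC).
Qed.

Lemma c_alt i : i.+1 < k -> b i < a i.+1.
Proof.
move=> ik.
have [C0 [CC0 aC0 bC0 em0 sm0]] := c_top (ltnW ik).
have [C [CC aC bC em sm]] := c_top ik.
have [ba0 hD0 aX0 bX0 e0] := c_D (ltnW ik).
have [ba hD aX bX e] := c_D ik.
have bD : b i \in D i by rewrite hD0 eqxx orbT.
have aD : a i \in D i by rewrite hD0 eqxx.
have bI : b i \in I i.+1 by case/fsetDP: bD.
have aI : a i \in I i.+1 by case/fsetDP: aD.
set M := smax (I i.+1).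
have [lt|ge] := ltnP M (a i.+1).
  by apply: leq_ltn_trans (smax_ub bI) lt.
have ne : (I i.+1 : seq nat) != [::].
  by rewrite -size_eq0 -lt0n; change (0 < #|` I i.+1|)%N; rewrite cardfs_gt0; apply/fset0Pn; exists (b i).
have MI := smax_mem ne.
have neM : a i.+1 != M by apply/eqP => h; move: aX; rewrite h MI.
have eq2 : smax (I i.+2) = M.
  apply/eqP; rewrite eqn_leq; apply/andP; split.
    apply: smax_le => x; rewrite e in_fsetU in_fset2 => /orP[xI|/orP[/eqP->|/eqP->]] //.
    - exact: smax_ub.
    - by apply: leq_trans (ltnW ba) ge.
  by apply: smax_ub; rewrite e in_fsetU MI.
rewrite ltnNge; apply/negP => le.
have ic : i.+2 < size c by rewrite c_size.
have nd := hnd (ltn0Sn i) ic; rewrite /= em0 em sm sm0 eq2 in nd.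
move: nd; rewrite /gtZOm /geZOm /ge_Om /= ltnn eqxx /=.
rewrite (ltnW ba0) le (ltnW ba) /=.
apply/negP; rewrite negbK; apply/eqP => h; case: h => h1 _.
by move: aX; rewrite -h1 aI.
Qed.

Definition xsc := mkseq (fun j => if odd j then b j./2 else a j./2) (2 * k).

Lemma xs_size : size xsc = 2 * k.
Proof. by rewrite size_mkseq. Qed.

Lemma xs_nth_a i : i < k -> nth 0 xsc (2*i) = a i.
Proof.
move=> ik; rewrite nth_mkseq; last lia.
by rewrite oddM /= mul2n doubleK.
Qed.

Lemma xs_nth_b i : i < k -> nth 0 xsc (2*i).+1 = b i.
Proof.
move=> ik; rewrite nth_mkseq; last lia.
by rewrite /= oddM /= mul2n uphalf_double.
Qed.

Lemma xs_take i : i <= k -> [fset x in take (2*i) xsc] = I i.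
Proof.
elim: i => [|i IH] ik.
  have [_ ->] := c0; by apply/fsetP => z; rewrite muln0 take0 !inE.
rewrite -take2k fset_take2; last by rewrite xs_size; lia.
rewrite IH ?(ltnW ik) // xs_nth_a // xs_nth_b //.
by have [_ _ _ _ e] := c_D ik; exact (esym e).
Qed.

Lemma xs_chain : perm_to_chain xsc = c.
Proof.
apply: (@eq_from_nth _ fset0).
  by rewrite /perm_to_chain size_map size_iota xs_size mul2n doubleK c_size.
move=> i; rewrite /perm_to_chain size_map size_iota xs_size mul2n doubleK => ik.
rewrite (nth_map 0) ?size_iota // nth_iota // add0n xs_take //.
Qed.

Lemma xs_all : [fset x in xsc] = S.
Proof.
have := xs_take (leqnn k); rewrite -xs_size take_size => ->.
by have := clast; rewrite c_size.
Qed.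

Lemma xs_uniq : uniq xsc.
Proof.
have := card_fseq xsc; rewrite xs_all hk -xs_size => h.
by apply/negPn/negP; rewrite -ltn_size_undup -h ltnn.
Qed.

Lemma xs_perm : perm_eq xsc S.
Proof.
apply: uniq_perm; [exact: xs_uniq | exact: fset_uniq |].
by move=> x; rewrite -xs_all inE.
Qed.

Lemma xs_alt : alternating xsc.
Proof.
move=> j; rewrite xs_size => jk.
have hj : j = (odd j + 2 * j./2)%N by rewrite mul2n odd_double_half.
case: (odd j) hj => /= hj; rewrite hj.
  rewrite add1n xs_nth_b; last by lia.
  rewrite take2k xs_nth_a; last by lia.
  by apply: c_alt; lia.
rewrite add0n xs_nth_a ?xs_nth_b; try lia.
by have [] := c_D (_ : j./2 < k); lia.
Qed.

Lemma xs_Bperm : B_perm S B xsc.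
Proof.
split; first exact: xs_perm.
move=> j; rewrite xs_size => /andP[j0 jk].
have hj : j = (odd j + 2 * j./2)%N by rewrite mul2n odd_double_half.
set i := j./2 in hj; clearbody i.
case: (odd j) hj => hj.
-
  have ik : i < k by move: jk hj; clear; lia.
  have {hj} -> : j = (2*i).+1 by move: hj; clear; lia.
  rewrite /=.
  have [ba hD aX bX e] := c_D ik.
  have ic : i.+1 < size c by rewrite c_size.
  have eJ : [fset x in take (2*i).+1 xsc] = I i `|` [fset a i].
    by rewrite fset_take1 ?xs_size; [rewrite xs_take ?(ltnW ik) // xs_nth_a | lia].
  have aD : a i \in D i by rewrite hD eqxx.
  have aI : a i \in I i.+1 by case/fsetDP: aD.
  have JI : I i `|` [fset a i] `<=` I i.+1.
    apply/fsubsetP => x; rewrite in_fsetU in_fset1 => /orP[xI|/eqP->] //.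
    exact: (fsubsetP (c_le (leqnSn i) ic) x xI).
  have JS : I i `|` [fset a i] `<=` S := fsubset_trans JI (c_sub ic).
  have aJ : a i \in I i `|` [fset a i] by rewrite in_fsetU in_fset1 eqxx orbT.
  rewrite eJ xs_nth_a //.
  have em : smax (take (2*i).+1 xsc) = maxn (a i) (smax (I i)).
    rewrite (take_nth 0) ?xs_size; last lia.
    rewrite xs_nth_a // (@smax_eq _ (a i :: take (2*i) xsc)); last first.
      by move=> z; rewrite -cats1 mem_cat !inE orbC.
    rewrite smax_cons; congr maxn; apply: smax_eq => z.
    by rewrite -(xs_take (ltnW ik)) inE.
  rewrite em.
  case: (leqP (smax (I i)) (a i)) => hM.

    have [C CC aC] := comp_of hB JS aJ.
    by apply/same_compP; exists C => //; rewrite aC.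

  set M := smax (I i).
  have [C [CC aC bC _ sm]] := c_top ik.
  have [CB CY _] := compsP CC.
  have eM : smax (I i.+1) = M.
    apply/eqP; rewrite eqn_leq; apply/andP; split; last first.
      by apply: smax_sub; apply: c_le (leqnSn i) ic.
    apply: smax_le => x; rewrite e in_fsetU in_fset2 => /orP[xI|/orP[/eqP->|/eqP->]].
    - exact: smax_ub.
    - exact: ltnW.
    - by apply: ltnW; apply: ltn_trans ba hM.
  have neC : (C : seq nat) != [::].
    by rewrite -size_eq0 -lt0n; change (0 < #|` C|)%N; rewrite cardfs_gt0; apply/fset0Pn; exists (a i).
  have MC : M \in C by rewrite -eM -sm; apply: smax_mem.
  have TB : [fset x in C | b i < x] \in B.
    apply: chord_tail => //; first by exists (b i).
    exists (a i), M; split => //; first by rewrite neq_ltn hM.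
    by apply: ltn_trans ba hM.
  apply: (inB_same TB).
  + apply/fsubsetP => x; rewrite !inE => /andP[xC bx].
    case: (boolP (x \in I i)) => //= xI.
    have xD : x \in D i by rewrite in_fsetD xI (fsubsetP CY x xC).
    move: xD; rewrite hD => /orP[//|/eqP xb].
    by move: bx; rewrite xb ltnn.
  + by rewrite !inE aC.
  + by rewrite !inE MC; apply: ltn_trans ba hM.
-
  have {hj} ej : j = 2*i by move: hj; clear; lia.
  case: i ej => [|i] ej; first by move: j0; rewrite ej.
  rewrite ej in jk *.
  have ik : i < k by lia.
  rewrite -take2k /= xs_nth_b // take2k xs_take //.
  have [C [CC aC bC _ sm]] := c_top ik.
  have neC : (C : seq nat) != [::].
    by rewrite -size_eq0 -lt0n; change (0 < #|` C|)%N; rewrite cardfs_gt0; apply/fset0Pn; exists (a i).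
  have em : smax (take (2 * i.+1) xsc) = smax (I i.+1).
    by apply: smax_eq => z; rewrite -(xs_take ik) inE.
  rewrite em -sm; apply/same_compP; exists C => //; rewrite bC /=.
  exact: smax_mem.
Qed.

End Surj.
End Main.

Theorem lemma4p3 (S : {fset nat}) (B : {fset {fset nat}}) (k : nat) :
  building_set S B -> chordal B -> #|` S| = 2 * k ->
  (forall C, C \in comps B S -> ~~ odd #|` C|) ->
  (forall xs, B_perm S B xs -> alternating xs ->
     max_chain S B (perm_to_chain xs) /\ no_decreasing B (perm_to_chain xs)) /\
  (forall xs ys, B_perm S B xs -> alternating xs -> B_perm S B ys -> alternating ys ->
     perm_to_chain xs = perm_to_chain ys -> xs = ys) /\
  (forall c, max_chain S B c -> no_decreasing B c ->
     exists xs, [/\ B_perm S B xs, alternating xs & perm_to_chain xs = c]).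
Proof.
move=> hB hc hk hSev; split; last split.
- by move=> xs; apply: (forward hB hk).
- by move=> xs ys; apply: (injective_part hB hk).
- move=> c hmc hnd; exists (xsc k c); split.
  + exact: (xs_Bperm hB hc hk hSev hmc hnd).
  + exact: (xs_alt hB hc hk hSev hmc hnd).
  + exact: (xs_chain hB hc hk hSev hmc).
Qed.
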